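(* Let $m\geq 3$ be an integer and let $A$ be a multiset of points in $\mathbb{Z}^2$ with $|A|\geq 4m-3$ (counting multiplicities). If $\boldsymbol{p}\in\mathbb{R}^2$ is a point with $\boldsymbol{p}\notin A$ that has half-space depth $m$ with respect to $A$, then $A$ can be partitioned into $m$ submultisets $A_1,\dots,A_m$ with $\boldsymbol{p}\in\conv(A_i)$ for every $i$.
   Context: A point $\boldsymbol{p}$ has half-space depth $t$ with respect to a multiset $A$ if every closed half-plane containing $\boldsymbol{p}$ contains at least $t$ points of $A$, counted with multiplicity. A partition of a multiset into submultisets means the multiplicities of each element in the parts sum to its multiplicity in the multiset. *)

(* Defs.v *)
(* Points of Z^2 are pairs of ints; the multiset A is a list
   (multiplicity = number of occurrences). The ambient reals: R : realType. *)
From HB Require Import structures.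
From mathcomp Require Import all_boot all_order all_algebra.
From mathcomp Require Import reals.
Set Implicit Arguments. Unset Strict Implicit. Unset Printing Implicit Defensive.
Import Order.TTheory GRing.Theory Num.Theory.
Local Open Scope ring_scope.

Definition embed (R : realType) (a : int * int) : R * R := (a.1%:~R, a.2%:~R).

Definition in_halfplane (R : realType) (u v c : R) (x : R * R) : bool :=
  u * x.1 + v * x.2 <= c.

Definition halfspace_depth (R : realType) (A : seq (int * int)) (p : R * R)
    (t : nat) : Prop :=
  forall u v c : R, (u, v) != (0, 0) -> in_halfplane u v c p ->
    (t <= count (fun a => in_halfplane u v c (embed R a)) A)%N.

Definition in_conv (R : realType) (B : seq (int * int)) (p : R * R) : Prop :=
  exists w : 'I_(size B) -> R,
    [/\ forall i, 0 <= w i,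
        \sum_(i < size B) w i = 1 &
        p = (\sum_(i < size B) w i * (embed R (nth (0, 0) B i)).1,
             \sum_(i < size B) w i * (embed R (nth (0, 0) B i)).2)].

(* Main.v *)
Require Import Defs.
From HB Require Import structures.
From mathcomp Require Import all_boot all_order all_algebra.
From mathcomp Require Import reals ring lra zify.
From Stdlib Require Import Classical_Prop.
Import Order.TTheory GRing.Theory Num.Theory.
Local Open Scope ring_scope.
Section Geo.
Variable R : realType.
Definition dt (u x : R * R) := u.1 * x.1 + u.2 * x.2.
Definition dd (x y : R * R) := x.1 * y.2 - x.2 * y.1.
Definition nv (u : R * R) : R * R := (- u.1, - u.2).

Lemma ddC x y : dd x y = - dd y x.
Proof. rewrite /dd; ring. Qed.
Lemma dd_self x : dd x x = 0.
Proof. rewrite /dd; ring. Qed.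
Lemma dtN u x : dt (nv u) x = - dt u x.
Proof. rewrite /dt /nv /=; ring. Qed.
Lemma cramer w a b c : dd b c * dt w a + dd c a * dt w b + dd a b * dt w c = 0.
Proof. rewrite /dd /dt; ring. Qed.
Lemma par w u x y : dd x y = 0 -> dt w x * dt u y = dt w y * dt u x.
Proof.
move=> h; apply/eqP; rewrite -subr_eq0.
have -> : dt w x * dt u y - dt w y * dt u x = (w.1 * u.2 - w.2 * u.1) * dd x y.
  rewrite /dt /dd; ring.
by rewrite h mulr0.
Qed.
Lemma normid x y : dt x y ^+ 2 + dd x y ^+ 2 = dt x x * dt y y.
Proof. rewrite /dt /dd; ring. Qed.
Lemma dt_self_gt0 x : x != (0, 0) -> 0 < dt x x.
Proof.
case: x => x1 x2 /= hx; rewrite /dt /=.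
case: (ltrgtP x1 0) => h1; try nra.
case: (ltrgtP x2 0) => h2; try nra.
by move: hx; rewrite h1 h2 eqxx.
Qed.

Lemma cramer3 w x y z : dd y z * dt w x = dd x z * dt w y + dd y x * dt w z.
Proof. rewrite /dd /dt; ring. Qed.

Lemma det_trans u x y z : 0 < dt u x -> 0 < dt u y -> 0 < dt u z ->
  0 <= dd x y -> 0 <= dd y z -> 0 <= dd x z.
Proof.
move=> hx hy hz hxy hyz.
have E := cramer3 u y x z.
have : 0 <= dd x z * dt u y.
  rewrite E; apply: addr_ge0; apply: mulr_ge0 => //; exact: ltW.
by rewrite pmulr_lge0.
Qed.

Lemma g1s u w x y z : 0 < dt u x -> 0 < dt u y -> 0 < dt u z ->
  0 <= dd y x -> 0 <= dd x z -> 0 < dt w y -> 0 < dt w z -> 0 < dt w x.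
Proof.
move=> hx hy hz hyx hxz wy wz.
have E1 := cramer3 w x y z; have E2 := cramer3 u x y z.
have [h0|h0] := eqVneq (dd x z) 0; last first.
  have hp : 0 < dd x z by rewrite lt_def h0.
  have d0 : 0 < dd y z.
    by rewrite -(pmulr_lgt0 _ hx) E2; apply: ltr_wpDr; [apply: mulr_ge0; lra|apply: mulr_gt0].
  by rewrite -(pmulr_rgt0 _ d0) E1; apply: ltr_wpDr; [apply: mulr_ge0; lra|apply: mulr_gt0].
have [h1|h1] := eqVneq (dd y x) 0; last first.
  have hp : 0 < dd y x by rewrite lt_def h1.
  have d0 : 0 < dd y z.
    by rewrite -(pmulr_lgt0 _ hx) E2 h0 mul0r add0r; apply: mulr_gt0.
  by rewrite -(pmulr_rgt0 _ d0) E1 h0 mul0r add0r; apply: mulr_gt0.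
have E4 := par w u y x h1.
by rewrite -(pmulr_lgt0 _ hy) -E4; apply: mulr_gt0.
Qed.

Lemma g2s_aux u w a b c e :
  0 < dt u a -> 0 < dt u b -> dt u c < 0 -> dt u e < 0 ->
  0 <= dd a b -> 0 <= dd c e -> 0 < dt w a -> 0 < dt w c -> 0 <= dd b e ->
  0 < dt w b \/ 0 < dt w e.
Proof.
move=> ua ub uc ue ab ce wa wc be.
case: (ltrP 0 (dt w b)) => wb; first by left.
case: (ltrP 0 (dt w e)) => we; first by right.
exfalso.
have bc : 0 <= dd b c.
  have E := cramer3 u c b e.
  have h1 : dd b e * dt u c <= 0 by nra.
  have h2 : 0 <= dd c e * dt u b by nra.
  nra.
have E := cramer3 w c b e.
have hbe : dd b e = 0.
  have h1 : 0 <= dd b e * dt w c by nra.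
  have h2 : dd c e * dt w b + dd b c * dt w e <= 0 by nra.
  nra.
have P := par w u b e hbe.
have wb0 : dt w b = 0 by nra.
have E2 := cramer w a b c.
rewrite wb0 mulr0 addr0 in E2.
have h3 : dd b c * dt w a <= 0 by nra.
have h4 : dd a b * dt w c >= 0 by nra.
have hab : dd a b = 0 by nra.
have P2 := par w u a b hab.
nra.
Qed.

Lemma g2s u w a b c e :
  0 < dt u a -> 0 < dt u b -> dt u c < 0 -> dt u e < 0 ->
  0 <= dd a b -> 0 <= dd c e -> 0 < dt w a -> 0 < dt w c ->
  0 < dt w b \/ 0 < dt w e.
Proof.
move=> ua ub uc ue ab ce wa wc.
case: (lerP 0 (dd b e)) => be; first exact: (g2s_aux u w a b c e ua ub uc ue ab ce wa wc be).
have eb : 0 <= dd e b by rewrite ddC; lra.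
have := @g2s_aux (nv u) w c e a b; rewrite !dtN !oppr_gt0 !oppr_lt0.
by move=> /(_ uc ue ua ub ce ab wc wa eb) [] ?; [right|left].
Qed.

Lemma g2_aux u w a b c e :
  0 < dt u a -> 0 < dt u b -> dt u c < 0 -> dt u e < 0 ->
  0 <= dd a b -> 0 <= dd c e -> dt w a <= 0 -> dt w c <= 0 -> 0 <= dd b e ->
  dt w b <= 0 \/ dt w e <= 0.
Proof.
move=> ua ub uc ue ab ce wa wc be.
case: (lerP (dt w b) 0) => wb; first by left.
case: (lerP (dt w e) 0) => we; first by right.
exfalso.
have bc : 0 <= dd b c.
  have E := cramer3 u c b e.
  have h1 : dd b e * dt u c <= 0 by nra.
  have h2 : 0 <= dd c e * dt u b by nra.
  nra.
have E := cramer3 w c b e.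
have hce : dd c e = 0.
  have h1 : dd b e * dt w c <= 0 by nra.
  have h2 : 0 <= dd b c * dt w e by nra.
  nra.
have P := par w u c e hce.
nra.
Qed.

Lemma g2 u w a b c e :
  0 < dt u a -> 0 < dt u b -> dt u c < 0 -> dt u e < 0 ->
  0 <= dd a b -> 0 <= dd c e -> dt w a <= 0 -> dt w c <= 0 ->
  dt w b <= 0 \/ dt w e <= 0.
Proof.
move=> ua ub uc ue ab ce wa wc.
case: (lerP 0 (dd b e)) => be; first exact: (g2_aux u w a b c e ua ub uc ue ab ce wa wc be).
have eb : 0 <= dd e b by rewrite ddC; lra.
have := @g2_aux (nv u) w c e a b; rewrite !dtN !oppr_gt0 !oppr_lt0.
by move=> /(_ uc ue ua ub ce ab wc wa eb) [] ?; [right|left].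
Qed.

Lemma cramerX a b c : dd b c * a.1 + dd c a * b.1 + dd a b * c.1 = 0.
Proof. rewrite /dd; ring. Qed.
Lemma cramerY a b c : dd b c * a.2 + dd c a * b.2 + dd a b * c.2 = 0.
Proof. rewrite /dd; ring. Qed.

Lemma witM a b c : 0 < dd a b -> 0 < dd c b -> b != (0, 0) ->
  exists w, [/\ 0 < dt w a, 0 < dt w b & 0 < dt w c].
Proof.
move=> ab cb bn.
pose s := (`|dt b a| + 1) / dd a b + (`|dt b c| + 1) / dd c b.
have Ew : forall v, dt (s * b.2 + b.1, - s * b.1 + b.2) v = s * dd v b + dt b v.
  by move=> v; rewrite /dt /dd /=; ring.
have q1 : 0 <= (`|dt b a| + 1) / dd a b by apply: divr_ge0; [apply: addr_ge0|apply: ltW].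
have q2 : 0 <= (`|dt b c| + 1) / dd c b by apply: divr_ge0; [apply: addr_ge0|apply: ltW].
have s1 : `|dt b a| + 1 <= s * dd a b.
  rewrite /s mulrDl mulfVK ?gt_eqF //; rewrite lerDl; apply: mulr_ge0 => //; exact: ltW.
have s2 : `|dt b c| + 1 <= s * dd c b.
  rewrite /s mulrDl [X in _ <= _ + X]mulfVK ?gt_eqF //; rewrite lerDr; apply: mulr_ge0 => //; exact: ltW.
pose w0 : R * R := (s * b.2 + b.1, - s * b.1 + b.2).
exists w0.
rewrite !Ew dd_self mulr0 add0r; split.
- have := ler_norm (- dt b a); rewrite normrN. lra.
- exact: dt_self_gt0.
- have := ler_norm (- dt b c); rewrite normrN. lra.
Qed.

Lemma witM' a b c : 0 < dd b a -> 0 < dd b c -> b != (0, 0) ->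
  exists w, [/\ 0 < dt w a, 0 < dt w b & 0 < dt w c].
Proof.
move=> ab cb bn.
pose s := (`|dt b a| + 1) / dd b a + (`|dt b c| + 1) / dd b c.
have Ew : forall v, dt (- s * b.2 + b.1, s * b.1 + b.2) v = s * dd b v + dt b v.
  by move=> v; rewrite /dt /dd /=; ring.
have q1 : 0 <= (`|dt b a| + 1) / dd b a by apply: divr_ge0; [apply: addr_ge0|apply: ltW].
have q2 : 0 <= (`|dt b c| + 1) / dd b c by apply: divr_ge0; [apply: addr_ge0|apply: ltW].
have s1 : `|dt b a| + 1 <= s * dd b a.
  rewrite /s mulrDl mulfVK ?gt_eqF //; rewrite lerDl; apply: mulr_ge0 => //; exact: ltW.
have s2 : `|dt b c| + 1 <= s * dd b c.
  rewrite /s mulrDl [X in _ <= _ + X]mulfVK ?gt_eqF //; rewrite lerDr; apply: mulr_ge0 => //; exact: ltW.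
pose w0 : R * R := (- s * b.2 + b.1, s * b.1 + b.2).
exists w0; rewrite !Ew dd_self mulr0 add0r; split.
- have := ler_norm (- dt b a); rewrite normrN. lra.
- exact: dt_self_gt0.
- have := ler_norm (- dt b c); rewrite normrN. lra.
Qed.

Definition convw (a b c : R * R) := exists l1 l2 l3 : R,
  [/\ 0 <= l1, 0 <= l2, 0 <= l3, l1 + l2 + l3 = 1 &
      l1 * a.1 + l2 * b.1 + l3 * c.1 = 0 /\ l1 * a.2 + l2 * b.2 + l3 * c.2 = 0].

Lemma normW a b c k1 k2 k3 : 0 <= k1 -> 0 <= k2 -> 0 <= k3 -> 0 < k1 + k2 + k3 ->
  k1 * a.1 + k2 * b.1 + k3 * c.1 = 0 -> k1 * a.2 + k2 * b.2 + k3 * c.2 = 0 ->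
  convw a b c.
Proof.
move=> h1 h2 h3 hs e1 e2; set s := k1 + k2 + k3.
have si : 0 <= s^-1 by rewrite invr_ge0 ltW.
exists (k1 / s), (k2 / s), (k3 / s); split.
- exact: mulr_ge0.
- exact: mulr_ge0.
- exact: mulr_ge0.
- by rewrite -!mulrDl divff // gt_eqF.
- split.
  + by rewrite ![_ / s * _]mulrAC -!mulrDl e1 mul0r.
  + by rewrite ![_ / s * _]mulrAC -!mulrDl e2 mul0r.
Qed.

Lemma pairX x y : dd x y = 0 -> - dt x y * x.1 + dt x x * y.1 = 0.
Proof.
move=> h; have -> : - dt x y * x.1 + dt x x * y.1 = - x.2 * dd x y by rewrite /dt /dd; ring.
by rewrite h mulr0.
Qed.
Lemma pairY x y : dd x y = 0 -> - dt x y * x.2 + dt x x * y.2 = 0.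
Proof.
move=> h; have -> : - dt x y * x.2 + dt x x * y.2 = x.1 * dd x y by rewrite /dt /dd; ring.
by rewrite h mulr0.
Qed.

Lemma colW a b c : a != (0, 0) -> b != (0, 0) -> c != (0, 0) ->
  dd b c = 0 -> dd c a = 0 -> dd a b = 0 ->
  (forall w, 0 < dt w a -> 0 < dt w b -> 0 < dt w c -> False) -> convw a b c.
Proof.
move=> an bn cn s1 s2 s3 noW.
have aa := dt_self_gt0 a an; have bb := dt_self_gt0 b bn.
case: (ltrP (dt a b) 0) => ab.
  apply: (normW a b c (- dt a b) (dt a a) 0); rewrite ?mul0r ?addr0;
    try lra; [exact: pairX | exact: pairY].
have ac0 : dd a c = 0 by rewrite ddC s2 oppr0.
case: (ltrP (dt a c) 0) => ac.
  apply: (normW a b c (- dt a c) 0 (dt a a)); rewrite ?mul0r ?addr0;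
    try lra; [exact: pairX | exact: pairY].
case: (ltrP (dt b c) 0) => bc.
  apply: (normW a b c 0 (- dt b c) (dt b b)); rewrite ?mul0r ?add0r;
    try lra; [exact: pairX | exact: pairY].
exfalso; apply: (noW a) => //.
- have := normid a b; rewrite s3 expr0n /= addr0 => E.
  rewrite lt_def ab andbT; apply/eqP => h; move: E; rewrite h expr0n /= => /esym/eqP.
  by rewrite mulf_eq0 !gt_eqF.
- have := normid a c; rewrite ac0 expr0n /= addr0 => E.
  rewrite lt_def ac andbT; apply/eqP => h; move: E; rewrite h expr0n /= => /esym/eqP.
  have cc := dt_self_gt0 c cn.
  by rewrite mulf_eq0 !gt_eqF.
Qed.

Lemma farkas3 a b c : a != (0, 0) -> b != (0, 0) -> c != (0, 0) ->
  (forall w : R * R, w != (0, 0) -> dt w a <= 0 \/ dt w b <= 0 \/ dt w c <= 0) ->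
  convw a b c.
Proof.
move=> an bn cn H.
have noW : forall w, 0 < dt w a -> 0 < dt w b -> 0 < dt w c -> False.
  move=> w wa wb wc.
  have wn : w != (0, 0).
    by apply: contraTneq wb => ->; rewrite /dt /= !mul0r addr0 ltxx.
  by case: (H w wn) => [|[]]; lra.
have C1 := cramerX a b c; have C2 := cramerY a b c.
have [/and3P [p1 p2 p3] | npos] := boolP [&& 0 <= dd b c, 0 <= dd c a & 0 <= dd a b].
  case: (ltrP 0 (dd b c + dd c a + dd a b)) => hs.
    exact: (normW a b c (dd b c) (dd c a) (dd a b)).
  apply: colW => //; lra.
have [/and3P [p1 p2 p3] | nneg] := boolP [&& dd b c <= 0, dd c a <= 0 & dd a b <= 0].
  case: (ltrP (dd b c + dd c a + dd a b) 0) => hs.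
    apply: (normW a b c (- dd b c) (- dd c a) (- dd a b)); rewrite ?oppr_ge0 //.
    - lra.
    - by rewrite !mulNr -!opprD C1 oppr0.
    - by rewrite !mulNr -!opprD C2 oppr0.
  apply: colW => //; lra.
move: npos nneg; rewrite !negb_and -!ltNge => /or3P [n1|n2|n3] /or3P [q1|q2|q3];
  try lra; exfalso.
- have [w [? ? ?]] := witM' b c a (ltac:(rewrite ddC; lra)) (ltac:(lra)) cn; exact: (noW w).
- have [w [? ? ?]] := witM a b c (ltac:(lra)) (ltac:(rewrite ddC; lra)) bn; exact: (noW w).
- have [w [? ? ?]] := witM b c a (ltac:(lra)) (ltac:(rewrite ddC; lra)) cn; exact: (noW w).
- have [w [? ? ?]] := witM' c a b (ltac:(rewrite ddC; lra)) (ltac:(lra)) an; exact: (noW w).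
- have [w [? ? ?]] := witM' a b c (ltac:(rewrite ddC; lra)) (ltac:(lra)) bn; exact: (noW w).
- have [w [? ? ?]] := witM c a b (ltac:(lra)) (ltac:(rewrite ddC; lra)) an; exact: (noW w).
Qed.

Lemma eps_small (T : eqType) (s : seq T) (f g : T -> R) :
  exists e : R, 0 < e /\ forall x, x \in s -> f x != 0 -> e * `|g x| < `|f x|.
Proof.
elim: s => [|x s [e0 [e0p IH]]]; first by exists 1; split => //.
have [fx0|fx0] := eqVneq (f x) 0.
  exists e0; split => // y; rewrite inE => /orP [/eqP ->|ys]; first by rewrite fx0 eqxx.
  exact: IH.
pose ex := `|f x| / (`|g x| + 1).
have exp : 0 < ex by apply: divr_gt0; [rewrite normr_gt0 | apply: ltr_wpDl].
exists (Order.min e0 ex); split; first by rewrite lt_min e0p exp.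
have hm1 : Order.min e0 ex <= e0 by rewrite ge_min lexx.
have hm2 : Order.min e0 ex <= ex by rewrite ge_min lexx orbT.
have mp : 0 < Order.min e0 ex by rewrite lt_min e0p exp.
move=> y; rewrite inE => /orP [/eqP ->|ys] fy.
  apply: (le_lt_trans (y := ex * `|g x|)); first by apply: ler_wpM2r.
  rewrite /ex mulrAC ltr_pdivrMr ?ltr_wpDl //.
  by rewrite mulrDr mulr1 ltrDl normr_gt0.
apply: (le_lt_trans (y := e0 * `|g y|)); last exact: IH.
by apply: ler_wpM2r.
Qed.

Lemma exists_min (P : nat -> Prop) n : P n -> exists k, P k /\ forall j, P j -> (k <= j)%N.
Proof.
elim: n {-2}n (leqnn n) => [|N IH] n hn Pn.
  exists n; split => // j _; by move: hn; rewrite leqn0 => /eqP ->.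
case: (classic (exists j, P j /\ (j < n)%N)) => [[j [Pj jn]]|H].
  by apply: (IH j) => //; lia.
exists n; split => // j Pj; case: (leqP n j) => // jn; exfalso; apply: H; by exists j.
Qed.

Lemma count_le_in (T : eqType) (s : seq T) (P Q : pred T) :
  (forall x, x \in s -> Q x -> P x) -> (count Q s <= count P s)%N.
Proof.
elim: s => [|y s IH] hsub //=.
have hy : Q y -> P y by apply: hsub; rewrite inE eqxx.
have hsub' : forall z, z \in s -> Q z -> P z by move=> z zs; apply: hsub; rewrite inE zs orbT.
have := IH hsub'.
by case: (Q y) hy => [->|] //; case: (P y); lia.
Qed.

Lemma count_lt (T : eqType) (s : seq T) (P Q : pred T) :
  (forall x, x \in s -> Q x -> P x) -> (exists2 x, x \in s & P x && ~~ Q x) ->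
  (count Q s < count P s)%N.
Proof.
elim: s => [|y s IH] hsub [x]; first by [].
have hsub' : forall z, z \in s -> Q z -> P z by move=> z zs; apply: hsub; rewrite inE zs orbT.
have hy : Q y -> P y by apply: hsub; rewrite inE eqxx.
rewrite inE => /orP [/eqP ->|xs] hx /=.
  case/andP: hx => Px nQx; rewrite Px (negbTE nQx) add0n add1n ltnS.
  exact: count_le_in.
have := IH hsub' (ex_intro2 _ _ x xs hx).
by case: (Q y) hy => [->|] //; case: (P y); lia.
Qed.
Variable p : R * R.

Definition vec (a : int * int) : R * R := (a.1%:~R - p.1, a.2%:~R - p.2).
Definition inK (w : R * R) (a : int * int) : bool := dt w (vec a) <= 0.
Definition Dp (A : seq (int * int)) (m : nat) :=
  forall w : R * R, w != (0, 0) -> (m <= count (inK w) A)%N.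
Definition nz (A : seq (int * int)) := forall a, a \in A -> vec a != (0, 0).

Lemma half_Dp A m : halfspace_depth A p m -> Dp A m.
Proof.
move=> H [u v] wn.
have := H u v (u * p.1 + v * p.2) wn (lexx _).
congr (_ <= _)%N; apply: eq_count => a.
rewrite /inK /in_halfplane /embed /dt /vec /= -subr_le0.
congr (_ <= _); ring.
Qed.

Lemma nz_sub A B : nz A -> {subset B <= A} -> nz B.
Proof. by move=> h s a aB; apply: h; apply: s. Qed.

Lemma in_conv_cons x B : in_conv B p -> in_conv (x :: B) p.
Proof.
case=> w [w0 w1 wp].
exists (fun i : 'I_(size B).+1 => if unlift ord0 i is Some j then w j else 0); split.
- by move=> i; case: (unlift ord0 i).
- by rewrite big_ord_recl unlift_none add0r -w1; apply: eq_bigr => i _; rewrite liftK.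
- rewrite wp !big_ord_recl unlift_none !mul0r !add0r; congr pair;
    by apply: eq_bigr => i _; rewrite liftK.
Qed.

Lemma in_conv_catl C B : in_conv B p -> in_conv (C ++ B) p.
Proof. by elim: C => //= x C IH h; apply: in_conv_cons; apply: IH. Qed.

Lemma in_conv3 a b c : convw (vec a) (vec b) (vec c) -> in_conv [:: a; b; c] p.
Proof.
case=> l1 [l2 [l3 [h1 h2 h3 hs [e1 e2]]]].
exists (fun i : 'I_3 => nth 0 [:: l1; l2; l3] i); split.
- by case=> [[|[|[|i]]]] //=.
- by rewrite !big_ord_recl big_ord0 /= addr0 addrA.
- rewrite !big_ord_recl !big_ord0 /= !addr0.
  move: e1 e2; rewrite /vec /embed /=; case: p => p1 p2 /= e1 e2.
  congr pair.
  + move: e1; move: (a.1%:~R : R) (b.1%:~R : R) (c.1%:~R : R) => x y z e1.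
    have E : l1 * x + (l2 * y + l3 * z) - p1 =
      l1 * (x - p1) + l2 * (y - p1) + l3 * (z - p1) + ((l1 + l2 + l3) - 1) * p1.
      by ring.
    rewrite e1 hs subrr mul0r addr0 in E.
    by apply/eqP; rewrite eq_sym -subr_eq0 E.
  + move: e2; move: (a.2%:~R : R) (b.2%:~R : R) (c.2%:~R : R) => x y z e2.
    have E : l1 * x + (l2 * y + l3 * z) - p2 =
      l1 * (x - p2) + l2 * (y - p2) + l3 * (z - p2) + ((l1 + l2 + l3) - 1) * p2.
      by ring.
    rewrite e2 hs subrr mul0r addr0 in E.
    by apply/eqP; rewrite eq_sym -subr_eq0 E.
Qed.

Lemma tight_free A d w : nz A ->
  (forall w', w' != (0, 0) -> (d <= count (inK w') A)%N) -> w != (0, 0) ->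
  count (inK w) A = d -> forall a, a \in A -> dt w (vec a) != 0.
Proof.
move=> hnz hmin wn hc a0 a0A; apply/negP => /eqP h0.
have ddn : dd w (vec a0) != 0.
  apply/negP => /eqP h1.
  have := normid w (vec a0); rewrite h0 h1 expr0n /= addr0 => /esym/eqP.
  by rewrite mulf_eq0 !gt_eqF // dt_self_gt0 // hnz.
pose sg : R := if 0 < dd w (vec a0) then 1 else -1.
have sgp : 0 < sg * dd w (vec a0).
  rewrite /sg; case: ifP => h; first by rewrite mul1r.
  rewrite mulN1r oppr_gt0 lt_neqAle ddn /=; move/negbT: h; by rewrite -leNgt.
have [e [ep He]] := eps_small _ A (fun a => dt w (vec a)) (fun a => sg * dd w (vec a)).
pose w' : R * R := (w.1 - e * sg * w.2, w.2 + e * sg * w.1).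
have Ew : forall v, dt w' v = dt w v + e * (sg * dd w v).
  by move=> v; rewrite /dt /dd /=; ring.
have w'n : w' != (0, 0).
  apply/negP => /eqP hw.
  have := Ew w; rewrite hw dd_self mulr0 mulr0 addr0 /dt /= !mul0r addr0 => /esym/eqP.
  by rewrite gt_eqF // dt_self_gt0.
have := hmin w' w'n; rewrite -hc => hle.
suff : (count (inK w') A < count (inK w) A)%N by lia.
apply: count_lt.
- move=> x xA; rewrite /inK Ew; apply: contraTT; rewrite -!ltNge => hx.
  have := He x xA (negbT (gt_eqF hx)); rewrite (gtr0_norm hx) => hlt.
  have := ler_norm (- (sg * dd w (vec x))); rewrite normrN => hn.
  have : 0 <= e by exact: ltW.
  nra.
- exists a0 => //; rewrite /inK Ew h0 add0r lexx /= -ltNge.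
  by apply: mulr_gt0.
Qed.

Definition le (a b : int * int) : bool := 0 <= dd (vec a) (vec b).
Definition side (u : R * R) (a : int * int) : bool := 0 < dt u (vec a).

Lemma le_refl a : le a a.
Proof. by rewrite /le dd_self. Qed.

Lemma le_total_in (P : pred (int * int)) : {in P &, total le}.
Proof.
move=> a b _ _; rewrite /le (ddC (vec b)).
by case: (lerP 0 (dd (vec a) (vec b))) => h //=; rewrite oppr_ge0 ltW.
Qed.

Lemma le_trans_in u : {in side u & &, transitive le}.
Proof.
move=> y x z hy hx hz; rewrite /le => h1 h2.
exact: (det_trans u (vec x) (vec y) (vec z)).
Qed.

Lemma sort_pw u t : all (side u) t -> pairwise le (sort le t) /\ all (side u) (sort le t).
Proof.
move=> ht.
have hs : all (side u) (sort le t) by rewrite (perm_all _ (permEl (perm_sort le t))).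
split => //.
rewrite -(sorted_pairwise_in (le_trans_in u)) //.
exact: (sort_sorted_in (le_total_in (side u))).
Qed.

Lemma pw_head a s b : pairwise le (a :: s) -> b \in a :: s -> le a b.
Proof.
move=> /= /andP [/allP h _]; rewrite inE => /orP [/eqP ->|bs]; first exact: le_refl.
exact: h.
Qed.

Lemma nth_split s k x0 : pairwise le s -> (k < size s)%N ->
  (forall y, y \in take k s -> le y (nth x0 s k)) /\
  (forall z, z \in drop k.+1 s -> le (nth x0 s k) z).
Proof.
move=> hpw hk.
have E : s = take k s ++ nth x0 s k :: drop k.+1 s by rewrite -drop_nth // cat_take_drop.
move: hpw; rewrite {1}E pairwise_cat => /and3P [/allrelP h1 _ /= /andP [/allP h2 _]].
split => [y yt|z zd]; last exact: h2.
by apply: h1 => //; rewrite inE eqxx.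
Qed.

Lemma ps u w s k x0 : all (side u) s -> pairwise le s -> (k < size s)%N ->
  inK w (nth x0 s k) -> all (inK w) (take k.+1 s) || all (inK w) (drop k s).
Proof.
move=> hside hpw hk hx.
have [h1 h2] := nth_split s k x0 hpw hk.
case E: (all (inK w) (take k.+1 s)) => //=.
move/negbT: E => /allPn [y yt ny].
apply/allP => z zd; apply/negPn/negP => nz.
move: yt; rewrite (take_nth x0 hk) mem_rcons inE => /orP [/eqP ey|yt].
  by move: ny; rewrite ey hx.
move: zd; rewrite (drop_nth x0 hk) inE => /orP [/eqP ez|zd].
  by move: nz; rewrite ez hx.
have sy : side u y by apply: (allP hside); exact: mem_take yt.
have sz : side u z by apply: (allP hside); exact: mem_drop zd.
have sx : side u (nth x0 s k) by apply: (allP hside); exact: mem_nth.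
move: hx; rewrite /inK leNgt => /negP; apply.
apply: (g1s u w (vec (nth x0 s k)) (vec y) (vec z)) => //.
- exact: h1.
- exact: h2.
- by rewrite ltNge.
- by rewrite ltNge.
Qed.

Lemma bt u w s k x0 : all (side u) s -> pairwise le s -> (k < size s)%N ->
  ~~ inK w (nth x0 s 0) -> ~~ inK w (nth x0 s k) -> all (predC (inK w)) (take k.+1 s).
Proof.
move=> hside hpw hk ha hx.
have [h1 _] := nth_split s k x0 hpw hk.
case: s hside hpw hk ha hx h1 => [//|a s1] hside hpw hk ha hx h1.
apply/allP => z zt /=.
move: (zt); rewrite (take_nth x0 hk) mem_rcons inE => /orP [/eqP ->|zt'] //.
have zs : z \in a :: s1 by apply: mem_take zt.
have sz : side u z by apply: (allP hside).
have sa : side u a by apply: (allP hside); rewrite inE eqxx.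
have sx : side u (nth x0 (a :: s1) k) by apply: (allP hside); exact: mem_nth.
rewrite /inK -ltNge.
apply: (g1s u w (vec z) (vec a) (vec (nth x0 (a :: s1) k))) => //.
- exact: (pw_head _ _ _ hpw zs).
- exact: h1.
- by move: ha; rewrite /inK -ltNge.
- by move: hx; rewrite /inK -ltNge.
Qed.

Lemma g2list u w a s c t :
  all (side u) (a :: s) -> all (side (nv u)) (c :: t) ->
  pairwise le (a :: s) -> pairwise le (c :: t) ->
  inK w a -> inK w c -> all (inK w) (a :: s) || all (inK w) (c :: t).
Proof.
move=> hs ht ps pt wa wc.
case E: (all (inK w) (a :: s)) => //.
move/negbT: E => /allPn [b bs nb].
rewrite orFb; apply/allP => e et.
have sa : side u a by apply: (allP hs); rewrite inE eqxx.
have sb : side u b by apply: (allP hs).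
have sc : side (nv u) c by apply: (allP ht); rewrite inE eqxx.
have se : side (nv u) e by apply: (allP ht).
move: sc se; rewrite /side !dtN !oppr_gt0 => sc se.
have := g2 u w (vec a) (vec b) (vec c) (vec e) sa sb sc se (pw_head _ _ _ ps bs) (pw_head _ _ _ pt et) wa wc.
case=> // hb; by move: nb; rewrite /inK hb.
Qed.

Lemma g2slist u w a s c t :
  all (side u) (a :: s) -> all (side (nv u)) (c :: t) ->
  pairwise le (a :: s) -> pairwise le (c :: t) ->
  ~~ inK w a -> ~~ inK w c -> all (predC (inK w)) (a :: s) || all (predC (inK w)) (c :: t).
Proof.
move=> hs ht ps pt wa wc.
case E: (all (predC (inK w)) (a :: s)) => //.
move/negbT: E => /allPn [b bs /negPn nb].
rewrite orFb; apply/allP => e et /=.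
have sa : side u a by apply: (allP hs); rewrite inE eqxx.
have sb : side u b by apply: (allP hs).
have sc : side (nv u) c by apply: (allP ht); rewrite inE eqxx.
have se : side (nv u) e by apply: (allP ht).
move: sc se; rewrite /side !dtN !oppr_gt0 => sc se.
move: wa wc; rewrite /inK -!ltNge => wa wc.
have := g2s u w (vec a) (vec b) (vec c) (vec e) sa sb sc se (pw_head _ _ _ ps bs) (pw_head _ _ _ pt et) wa wc.
case=> hb; first by move: nb; rewrite /inK leNgt hb.
by [].
Qed.

Lemma split1 (s : seq (int * int)) x0 : (0 < size s)%N -> s = nth x0 s 0 :: drop 1 s.
Proof. by case: s => //= a s _; rewrite drop0. Qed.

Lemma split3 (s : seq (int * int)) k x0 : (0 < k)%N -> (k < size s)%N ->
  s = nth x0 s 0 :: drop 1 (take k s) ++ nth x0 s k :: drop k.+1 s.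
Proof.
move=> k0 hk.
have E : s = take k s ++ nth x0 s k :: drop k.+1 s by rewrite -drop_nth // cat_take_drop.
rewrite {1}E; case: s hk E => [//|a s] hk E /=.
by case: k k0 hk E => [//|k] _ hk E /=; rewrite drop0.
Qed.

Lemma count_split (P : pred (int * int)) s k :
  count P s = (count P (take k s) + count P (drop k s))%N.
Proof. by rewrite -count_cat cat_take_drop. Qed.

Lemma all_countE (P : pred (int * int)) s : all P s -> count P s = size s.
Proof. by rewrite all_count => /eqP. Qed.

Lemma allC_count (P : pred (int * int)) s : all (predC P) s -> count P s = 0%N.
Proof.
move=> h; apply/eqP; rewrite -leqn0 leqNgt -has_count; apply/negP => /hasP [x xs Px].
by move: (allP h x xs) => /=; rewrite Px.
Qed.

Lemma nv_neq0 w : w != (0, 0) -> nv w != (0, 0).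
Proof. by case: w => x y; rewrite /nv !xpair_eqE !oppr_eq0. Qed.

Lemma count_head_le (P : pred (int * int)) s k x0 : (0 < k)%N -> (0 < size s)%N ->
  (P (nth x0 s 0) <= count P (take k s))%N.
Proof. case: s => [//|a s] + _; case: k => [//|k] _ /=; by case: (P a). Qed.

Ltac nclean :=
  repeat match goal with
  | H : is_true (leq _ _) |- _ => revert H
  | H : @eq nat _ _ |- _ => revert H
  end;
  repeat match goal with H : _ |- _ => clear H end;
  intros.

Lemma main n : forall A m, size A = n -> (0 < m)%N -> nz A -> Dp A m -> (3 * m <= n)%N ->
  exists parts, [/\ size parts = m, perm_eq (flatten parts) A &
                    forall B, B \in parts -> in_conv B p].
Proof.
elim/ltn_ind: n => n IH A m hsz m0 hnz hD h3.
have e10 : ((1, 0) : R * R) != (0, 0) by rewrite xpair_eqE oner_eq0.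
have [d [[w0 [w0n hw0]] hmin]] :=
  exists_min (fun k => exists w, w != (0, 0) /\ count (inK w) A = k)
    (count (inK (1, 0)) A) (ex_intro _ (1, 0) (conj e10 erefl)).
have hmin' : forall w, w != (0, 0) -> (d <= count (inK w) A)%N.
  by move=> w wn; apply: hmin; exists w.
have md : (m <= d)%N by rewrite -hw0; apply: hD.
have free := tight_free A d w0 hnz hmin' w0n hw0.
pose T := filter (side w0) A.
pose L := filter (side (nv w0)) A.
have hAL : perm_eq A (T ++ L).
  have -> : L = filter (predC (side w0)) A.
    apply: eq_in_filter => a aA; rewrite /side dtN oppr_gt0 /= -leNgt le_eqVlt.
    by rewrite (negbTE (free a aA)).
  by rewrite perm_sym perm_filterC.
have sL : size L = d.
  rewrite size_filter -hw0; apply: eq_in_count => a aA.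
  by rewrite /side /inK dtN oppr_gt0 le_eqVlt (negbTE (free a aA)).
have sT : (d <= size T)%N.
  have := hmin' (nv w0) (nv_neq0 w0 w0n).
  suff -> : count (inK (nv w0)) A = size T by [].
  rewrite size_filter; apply: eq_in_count => a aA.
  by rewrite /side /inK dtN oppr_le0 le_eqVlt eq_sym (negbTE (free a aA)).
have sn : (size T + size L)%N = n by rewrite -size_cat -(perm_size hAL).
pose Ts := sort le T.
pose Ls := sort le L.
have [pwT allT] := sort_pw w0 T (filter_all _ _).
have [pwL allL] := sort_pw (nv w0) L (filter_all _ _).
have pTs : perm_eq Ts T := permEl (perm_sort le T).
have pLs : perm_eq Ls L := permEl (perm_sort le L).
have sTs : size Ts = size T := perm_size pTs.
have sLs : size Ls = d by rewrite (perm_size pLs).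
have hA : perm_eq A (Ts ++ Ls).
  apply: (perm_trans hAL); apply: perm_cat; by rewrite perm_sym.
have cntA : forall P, count P A = (count P Ts + count P Ls)%N.
  by move=> P; rewrite (permP hA) count_cat.
have memTs : {subset Ts <= A} by move=> a aT; rewrite (perm_mem hA) mem_cat aT.
have memLs : {subset Ls <= A} by move=> a aL; rewrite (perm_mem hA) mem_cat aL orbT.
have x0 : int * int := (0, 0).
have [lt3|eq3] : (3 * m < n)%N \/ n = (3 * m)%N by (nclean; lia).
  have [x [xA hDx]] : exists x, x \in A /\ Dp (rem x A) m.
    case: (ltnP m d) => hmd.
      have A0 : (0 < size A)%N by (nclean; lia).
      exists (nth x0 A 0); split; first exact: mem_nth.
      move=> w wn; rewrite count_rem mem_nth //=.
      have := hmin' w wn; (nclean; lia).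
    have dm : d = m by (nclean; lia).
    have hk : (m < size Ts)%N by (nclean; lia).
    exists (nth x0 Ts m); split; first by apply: memTs; exact: mem_nth.
    move=> w wn; rewrite count_rem memTs ?mem_nth //=.
    case Kx: (inK w (nth x0 Ts m)); last by rewrite subn0; apply: hD.
    rewrite cntA.
    have := ps w0 w Ts m x0 allT pwT hk Kx => /orP [h|h].
      have := count_split (inK w) Ts m.+1; rewrite (all_countE _ _ h) (size_takel hk).
      (nclean; lia).
    have := count_split (inK w) Ts m; rewrite (all_countE _ _ h) size_drop.
    (nclean; lia).
  have hsz' : size (rem x A) = n.-1 by rewrite size_rem // hsz.
  have [parts [ps1 ps2 ps3]] := IH n.-1 (ltac:((nclean; lia))) (rem x A) m hsz' m0
     (nz_sub A (rem x A) hnz (mem_rem (s := A) (x := x))) hDx (ltac:((nclean; lia))).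
  case: parts ps1 ps2 ps3 => [|B0 rest] ps1 ps2 ps3; first by move: ps1 m0 => <-.
  exists ((x :: B0) :: rest); split => //.
    have hr : perm_eq (x :: rem x A) A by rewrite perm_sym; exact: perm_to_rem.
    apply: (perm_trans _ hr).
    by rewrite /= perm_cons.
  move=> B; rewrite inE => /orP [/eqP ->|Bin].
    by apply: in_conv_cons; apply: ps3; rewrite inE eqxx.
  by apply: ps3; rewrite inE Bin orbT.
have T0 : (0 < size Ts)%N by (nclean; lia).
have L0 : (0 < size Ls)%N by (nclean; lia).
pose k := if (m < d)%N then (size Ts).-1 else m.
have [k1 hk kd] : [/\ (0 < k)%N, (k < size Ts)%N & (size Ts - k.+1 < d)%N].
  by rewrite /k; case: (ltnP m d) => h; split; (nclean; lia).
pose t1 := nth x0 Ts 0; pose tj := nth x0 Ts k; pose l1 := nth x0 Ls 0.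
have eTs : Ts = t1 :: drop 1 (take k Ts) ++ tj :: drop k.+1 Ts := split3 Ts k x0 k1 hk.
have eTs1 : Ts = t1 :: drop 1 Ts := split1 Ts x0 T0.
have eLs : Ls = l1 :: drop 1 Ls := split1 Ls x0 L0.
pose A' := drop 1 (take k Ts) ++ drop k.+1 Ts ++ drop 1 Ls.
have hA' : perm_eq A ([:: t1; tj; l1] ++ A').
  apply: (perm_trans hA).
  have -> : Ts ++ Ls = t1 :: (drop 1 (take k Ts) ++ tj :: drop k.+1 Ts) ++ l1 :: drop 1 Ls.
    by rewrite [X in X ++ _]eTs [X in _ ++ X]eLs.
  apply/permP => P /=; rewrite !count_cat /=; (nclean; lia).
have sA' : size A' = (n - 3)%N.
  have := perm_size hA'; rewrite size_cat /= hsz; (nclean; lia).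
have t1A : t1 \in A by apply: memTs; exact: mem_nth.
have tjA : tj \in A by apply: memTs; exact: mem_nth.
have l1A : l1 \in A by apply: memLs; exact: mem_nth.
have capG : forall w, w != (0, 0) -> [|| inK w t1, inK w tj | inK w l1].
  move=> w wn; apply/negPn/negP; rewrite !negb_or => /and3P [n1 nj nl].
  have := hmin' w wn; rewrite cntA.
  have hb := bt w0 w Ts k x0 allT pwT hk n1 nj.
  have := g2slist w0 w t1 (drop 1 Ts) l1 (drop 1 Ls) (ltac:(by rewrite -eTs1))
    (ltac:(by rewrite -eLs)) (ltac:(by rewrite -eTs1)) (ltac:(by rewrite -eLs)) n1 nl.
  rewrite -eTs1 -eLs => /orP [hT|hL].
    rewrite (allC_count _ _ hT) add0n [X in count _ X]eLs /= (negbTE nl) add0n.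
    have := count_size (inK w) (drop 1 Ls); rewrite size_drop sLs.
    by (nclean; lia).
  rewrite (allC_count _ _ hL) addn0 (count_split _ Ts k.+1) (allC_count _ _ hb) add0n.
  have := count_size (inK w) (drop k.+1 Ts); rewrite size_drop.
  by (nclean; lia).
have convG : in_conv [:: t1; tj; l1] p.
  apply: in_conv3; apply: farkas3; [exact: hnz|exact: hnz|exact: hnz|].
  move=> w wn; have := capG w wn; rewrite /inK => /or3P [h|h|h];
    [left|right; left|right; right] => //.
have hDA' : Dp A' m.-1.
  move=> w wn; rewrite -subn1; have hc := hmin' w wn.
  have E : count (inK w) A = (count (inK w) [:: t1; tj; l1] + count (inK w) A')%N.
    by rewrite (permP hA') count_cat.
  rewrite /= addn0 in E.
  case: (ltnP m.+1 d) => hd.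
    by move: E hc; case: (inK w t1); case: (inK w tj); case: (inK w l1); (nclean; lia).
  case: (ltnP m d) => hmd.
    (* d = m + 1 *)
    case K1: (inK w t1); case Kj: (inK w tj); case Kl: (inK w l1);
      rewrite ?K1 ?Kj ?Kl in E; try (by (nclean; lia)).
    case: (ltnP d (count (inK w) A)) => hcA; first by (nclean; lia).
    have tw : count (inK w) A = d by (nclean; lia).
    have fw := tight_free A d w hnz hmin' wn tw.
    exfalso.
    have := capG (nv w) (nv_neq0 w wn).
    move: K1 Kj Kl; rewrite /inK !dtN !oppr_le0 => K1 Kj Kl.
    case/or3P => h.
    - by move: (fw t1 t1A); rewrite eq_le K1 h.
    - by move: (fw tj tjA); rewrite eq_le Kj h.
    - by move: (fw l1 l1A); rewrite eq_le Kl h.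
  have dm : d = m by (nclean; lia).
  have km : k = m by rewrite /k ltnNge hmd.
  have sTs2 : size Ts = (2 * m)%N by (nclean; lia).
  have cLs : count (inK w) Ls = (inK w l1 + count (inK w) (drop 1 Ls))%N.
    by rewrite [X in count _ X]eLs.
  have cTs : count (inK w) Ts = (inK w t1 + count (inK w) (drop 1 Ts))%N.
    by rewrite [X in count _ X]eTs1.
  rewrite cntA in E hc.
  case Kj: (inK w tj).
    have hkm : (m < size Ts)%N by rewrite -km.
    have Kj' : inK w (nth x0 Ts m) by rewrite -km.
    have := ps w0 w Ts m x0 allT pwT hkm Kj' => /orP [h|h].
      have := count_split (inK w) Ts m.+1; rewrite (all_countE _ _ h) (size_takel hkm).
      move: E cLs; rewrite Kj; case: (inK w t1); case: (inK w l1); (nclean; lia).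
    have := count_split (inK w) Ts m; rewrite (all_countE _ _ h) size_drop.
    have := count_head_le (inK w) Ts m x0 m0 T0.
    move: E cLs; rewrite Kj; case: (inK w t1); case: (inK w l1); (nclean; lia).
  rewrite Kj in E.
  case K1: (inK w t1); case Kl: (inK w l1); rewrite ?K1 ?Kl in E cTs cLs;
    try (by (nclean; lia)).
  have := g2list w0 w t1 (drop 1 Ts) l1 (drop 1 Ls) (ltac:(by rewrite -eTs1))
    (ltac:(by rewrite -eLs)) (ltac:(by rewrite -eTs1)) (ltac:(by rewrite -eLs)) K1 Kl.
  rewrite -eTs1 -eLs => /orP [hT|hL].
    by move: E; rewrite (all_countE _ _ hT); (nclean; lia).
  by move: E; rewrite (all_countE _ _ hL); (nclean; lia).

have nzA' : nz A'.
  by apply: (nz_sub A A' hnz) => x xA'; rewrite (perm_mem hA') mem_cat xA' orbT.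
case: (ltnP 1 m) => hm.
  have [parts [ps1 ps2 ps3]] := IH (n - 3)%N (ltac:(nclean; lia)) A' m.-1 sA'
     (ltac:(nclean; lia)) nzA' hDA' (ltac:(nclean; lia)).
  exists ([:: t1; tj; l1] :: parts); split.
  - by rewrite /= ps1; (nclean; lia).
  - have h1 : perm_eq (flatten ([:: t1; tj; l1] :: parts)) ([:: t1; tj; l1] ++ A').
      by rewrite /= !perm_cons.
    by apply: (perm_trans h1); rewrite perm_sym.
  - move=> B; rewrite inE => /orP [/eqP ->|Bin] //; exact: ps3.
have A'0 : A' = [::] by apply/eqP; rewrite -size_eq0 sA'; (nclean; lia).
exists [:: [:: t1; tj; l1]]; split.
- by rewrite /=; (nclean; lia).
- by rewrite /= perm_sym; move: hA'; rewrite A'0 cats0.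
- by move=> B; rewrite inE => /eqP ->.
Qed.
End Geo.

Lemma nz_of (R : realType) (p : R * R) (A : seq (int * int)) :
  (forall a, a \in A -> p != embed R a) -> nz R p A.
Proof.
move=> h a aA; apply: contra (h a aA) => /eqP; rewrite /vec /embed.
case: p {h} => p1 p2 /= [/eqP e1 /eqP e2].
move: e1 e2; rewrite !subr_eq0 => /eqP <- /eqP <-.
by [].
Qed.

Theorem lemma2 (R : realType) (m : nat) (A : seq (int * int)) (p : R * R) :
  (3 <= m)%N -> (4 * m - 3 <= size A)%N ->
  (forall a, a \in A -> p != embed R a) ->
  halfspace_depth A p m ->
  exists parts : seq (seq (int * int)),
    [/\ size parts = m,
        perm_eq (flatten parts) A &
        forall B, B \in parts -> in_conv B p].
Proof.
move=> m3 hsz hp hd.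
have m0 : (0 < m)%N by lia.
have h3 : (3 * m <= size A)%N by lia.
exact: (@main R p (size A) A m erefl m0 (nz_of R p A hp) (half_Dp R p A m hd) h3).
Qed.
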